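(* Let $\Lambda$ be a finite interval which is the union of three consecutive intervals $\Lambda_l,\Lambda_m,\Lambda_r$ with $|\Lambda_m|\ge6$, and put $\Lambda_1=\Lambda_l\cup\Lambda_m$, $\Lambda_2=\Lambda_m\cup\Lambda_r$. Then $C_\Lambda=C_{\Lambda_1}C_{\Lambda_2}=C_{\Lambda_2}C_{\Lambda_1}$.
   Context: $\mathcal H_\Lambda=\bigotimes_{x\in\Lambda}\mathbb C^2$ with orthonormal basis $|\boldsymbol\sigma\rangle$, $\boldsymbol\sigma\in\{0,1\}^\Lambda$. Tilings of a finite interval: a tile occupies consecutive sites and carries a 0/1 word (its particle content): void $0$; monomer $100$; dimer $011000$; left boundary dimer $11000$ (allowed only as the first tile); and, allowed only as the last tile: right dimer $011$, right 1-monomer $1$, right 2-monomer $10$, truncated 1-dimer $0110$, truncated 2-dimer $01100$. A root tiling is a tiling by consecutive tiles consisting of voids and monomers, optionally with a left boundary dimer as first tile and optionally with one of right dimer, right 1-monomer, right 2-monomer as last tile. A VMD tiling derived from a root tiling $R$ is obtained by choosing disjoint pairs of consecutive tiles of $R$, each either two monomers (replaced by a dimer) or a monomer followed by a right $j$-monomer, $j\in\{1,2\}$ (replaced by the truncated $j$-dimer). $\mathcal D_{\Lambda'}$ is the set of all VMD tilings of $\Lambda'$ (over all root tilings), and $\boldsymbol\sigma_{\Lambda'}(\mathbf D)$ the concatenated particle content. For $\Lambda'\subseteq\Lambda$, $\mathcal C_{\Lambda'}=\operatorname{span}\{|\boldsymbol\sigma_{\Lambda'}(\mathbf D)\rangle:\mathbf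 D\in\mathcal D_{\Lambda'}\}\subseteq\mathcal H_{\Lambda'}$ and $C_{\Lambda'}$ is the orthogonal projection in $\mathcal H_\Lambda$ onto $\mathcal C_{\Lambda'}\otimes\mathcal H_{\Lambda\setminus\Lambda'}$. *)

(* Defs.v *)
(* Quantum spin chain Hilbert space H_Lambda = (C^2)^{(x) Lambda}
   is modelled as row vectors indexed by configurations sigma : {ffun 'I_n -> bool}
   (the orthonormal basis |sigma>), with coefficients in an arbitrary
   numClosedFieldType C (e.g. the complex numbers).  Operators are square
   matrices acting on row vectors; orthogonal projections are given by the
   library's [proj_ortho] (mathcomp/algebra/spectral.v). *)
From HB Require Import structures.
From mathcomp Require Import all_boot all_order all_algebra.
From Stdlib Require Import ClassicalEpsilon.
Set Implicit Arguments.
Unset Strict Implicit.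
Unset Printing Implicit Defensive.
Import Order.TTheory GRing.Theory Num.Theory.
Local Open Scope ring_scope.

Inductive tile : Type :=
  | Void
  | Mono
  | Dimer
  | LDimer   (* 11000, only as first tile *)
  | RDimer   (* 011, only as last tile *)
  | RMono1   (* 1, only as last tile *)
  | RMono2   (* 10, only as last tile *)
  | TDimer1  (* 0110, only as last tile *)
  | TDimer2. (* 01100, only as last tile *)

Definition tile_content (t : tile) : seq bool :=
  match t with
  | Void => [:: false]
  | Mono => [:: true; false; false]
  | Dimer => [:: false; true; true; false; false; false]
  | LDimer => [:: true; true; false; false; false]
  | RDimer => [:: false; true; true]
  | RMono1 => [:: true]
  | RMono2 => [:: true; false]
  | TDimer1 => [:: false; true; true; false]
  | TDimer2 => [:: false; true; true; false; false]
  end.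

Definition tiling_content (D : seq tile) : seq bool :=
  flatten (map tile_content D).

Definition root_tiling (R : seq tile) : Prop :=
  exists (pre mid suf : seq tile),
    R = pre ++ mid ++ suf /\
    (pre = [::] \/ pre = [:: LDimer]) /\
    (forall t, List.In t mid -> t = Void \/ t = Mono) /\
    (suf = [::] \/ suf = [:: RDimer] \/ suf = [:: RMono1] \/ suf = [:: RMono2]).

Inductive derived : seq tile -> seq tile -> Prop :=
  | der_nil : derived [::] [::]
  | der_keep t R D : derived R D -> derived (t :: R) (t :: D)
  | der_dimer R D : derived R D -> derived [:: Mono, Mono & R] (Dimer :: D)
  | der_trunc1 R D : derived R D -> derived [:: Mono, RMono1 & R] (TDimer1 :: D)
  | der_trunc2 R D : derived R D -> derived [:: Mono, RMono2 & R] (TDimer2 :: D).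

Definition vmd_tiling (L : nat) (D : seq tile) : Prop :=
  exists R, root_tiling R /\ derived R D /\ size (tiling_content D) = L.

Definition vmd_word (L : nat) (w : seq bool) : Prop :=
  exists D, vmd_tiling L D /\ tiling_content D = w.

Definition decP (P : Prop) : bool :=
  if excluded_middle_informative P then true else false.

(* The chain Lambda = {0,...,n-1}; configurations and their restriction to the
   subinterval [a, b) (read left to right). *)
Definition config (n : nat) := {ffun 'I_n -> bool}.

Definition restr (n : nat) (s : config n) (a b : nat) : seq bool :=
  map (fun i : 'I_n => s i)
      (filter (fun i : 'I_n => (a <= i < b)%N) (enum 'I_n)).

Definition dimH (n : nat) := #|{: config n}|.

Definition ket (C : nzRingType) (n : nat) (s : config n) : 'rV[C]_(dimH n) :=
  delta_mx 0 (enum_rank s).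

(* C_{[a,b)} (x) H_{Lambda \ [a,b)} = span{ |sigma> : sigma|_{[a,b)} is the
   particle content of a VMD tiling of [a,b) }. *)
Definition Cspace (C : fieldType) (n a b : nat) : 'M[C]_(dimH n) :=
  (\sum_(s : config n | decP (vmd_word (b - a) (restr s a b))) <<ket C s>>)%MS.

Definition Cproj (C : numClosedFieldType) (n a b : nat) : 'M[C]_(dimH n) :=
  proj_ortho (Cspace C n a b).

(* Main.v *)
Require Import Defs.
From HB Require Import structures.
From mathcomp Require Import all_boot all_order all_algebra zify.
From Stdlib Require ClassicalEpsilon.
Set Implicit Arguments. Unset Strict Implicit. Unset Printing Implicit Defensive.

Definition allowed (p : nat) (t : tile) : option nat :=
  match p, t with
  | 0, LDimer => Some 1
  | 0, Void | 0, Mono | 0, Dimer => Some 1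
  | 0, _ => Some 2
  | 1, Void | 1, Mono | 1, Dimer => Some 1
  | 1, LDimer => None
  | 1, _ => Some 2
  | _, _ => None
  end.

Definition all_tiles := [:: Void; Mono; Dimer; LDimer; RDimer; RMono1; RMono2; TDimer1; TDimer2].

Definition cfg := (nat * seq bool)%type.

Definition tstep (p : nat) (a : bool) (t : tile) : option cfg :=
  match allowed p t with
  | Some p' => if head false (tile_content t) == a then Some (p', behead (tile_content t)) else None
  | None => None
  end.

Fixpoint accN (c : cfg) (w : seq bool) : bool :=
  match w with
  | [::] => c.2 == [::]
  | a :: w' => match c.2 with
      | b :: rest => (a == b) && accN (c.1, rest) w'
      | [::] => has (fun t => oapp (fun c' => accN c' w') false (tstep c.1 a t)) all_tiles
      end
  end.

Definition nxt (c : cfg) (a : bool) : seq cfg :=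
  match c.2 with
  | b :: rest => if a == b then [:: (c.1, rest)] else [::]
  | [::] => pmap (tstep c.1 a) all_tiles
  end.

Definition suffixes : seq (seq bool) :=
  undup (flatten [seq [seq drop k (tile_content t) | k <- iota 1 6] | t <- all_tiles]).
Definition allconfigs : seq cfg := Eval vm_compute in [seq (p, r) | p <- [:: 0; 1; 2], r <- suffixes].

Definition stepS (Q : seq cfg) (a : bool) : seq cfg :=
  [seq c <- allconfigs | has (fun c0 => c \in nxt c0 a) Q].
Definition deltaS (Q : seq cfg) (w : seq bool) := foldl stepS Q w.
Definition init : seq cfg := [:: (0, [::])].

Fixpoint reach (k : nat) : seq (seq cfg) :=
  if k is k'.+1 then
    let R := reach k' in undup (R ++ flatten [seq [:: stepS Q true; stepS Q false] | Q <- R])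
  else [:: init].
Definition Rlist := Eval vm_compute in reach 14.

Fixpoint words (k : nat) : seq (seq bool) :=
  if k is k'.+1 then [seq b :: w | b <- [:: true; false], w <- words k'] else [:: [::]].

Definition final (c : cfg) := c.2 == [::].

Lemma check_next : all (fun c => all (fun a => all (mem allconfigs) (nxt c a)) [:: true; false]) allconfigs.
Proof. by vm_compute. Qed.
Lemma check_init : (init \in Rlist) && all (mem allconfigs) init.
Proof. by vm_compute. Qed.
Lemma check_reach : all (fun Q => (stepS Q true \in Rlist) && (stepS Q false \in Rlist)) Rlist.
Proof. by vm_compute. Qed.
Lemma check_sync : all (fun Q => all (fun y => (deltaS Q y == [::]) || (deltaS Q y == deltaS init y)) (words 6)) Rlist.
Proof. by vm_compute. Qed.
Lemma check_pre : all (fun Q => all (fun y => (deltaS Q y == [::]) || has final (deltaS Q y)) (words 5)) Rlist.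
Proof. by vm_compute. Qed.

Lemma has_pmap (T U : Type) (f : T -> option U) (q : pred U) (s : seq T) :
  has q (pmap f s) = has (fun x => oapp q false (f x)) s.
Proof. by elim: s => //= x s IH; case: (f x) => //= y; rewrite IH. Qed.

Lemma accN_cons c a w : accN c (a :: w) = has (accN^~ w) (nxt c a).
Proof.
case: c => p [|b rest] /=; first by rewrite has_pmap.
by rewrite /nxt /=; case: (a == b) => /=; rewrite ?orbF.
Qed.

Definition accS (Q : seq cfg) w := has (accN^~ w) Q.

Lemma stepS_all Q a : all (mem allconfigs) (stepS Q a).
Proof. by apply/allP => c; rewrite mem_filter => /andP[]. Qed.

Lemma accS_cons Q a w : all (mem allconfigs) Q -> accS Q (a :: w) = accS (stepS Q a) w.
Proof.
move=> /allP HQ; rewrite /accS; apply/hasP/hasP.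
- move=> [c0 c0Q]; rewrite accN_cons => /hasP [c cn ac]; exists c => //.
  rewrite mem_filter; apply/andP; split; last first.
  + have Ha : a \in [:: true; false] by rewrite !inE; case: (a) => /=.
    have H0 := allP check_next c0 (HQ _ c0Q).
    have H1 := allP H0 a Ha.
    exact: (allP H1 c cn).
  by apply/hasP; exists c0.
- move=> [c]; rewrite mem_filter => /andP[/hasP [c0 c0Q cn] _] ac.
  by exists c0 => //; rewrite accN_cons; apply/hasP; exists c.
Qed.

Lemma accS_delta Q w : all (mem allconfigs) Q -> accS Q w = has final (deltaS Q w).
Proof.
elim: w Q => [|a w IH] Q HQ /=; first by [].
by rewrite accS_cons // IH // stepS_all.
Qed.

Lemma deltaS_cat Q u v : deltaS Q (u ++ v) = deltaS (deltaS Q u) v.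
Proof. exact: foldl_cat. Qed.

Lemma deltaS_nil w : deltaS [::] w = [::].
Proof. by elim: w => //= a w IH; rewrite /stepS /= filter_pred0 in IH * => //. Qed.

Lemma deltaS_R Q w : Q \in Rlist -> deltaS Q w \in Rlist.
Proof.
elim: w Q => [|a w IH] Q HQ; first exact: HQ.
rewrite /deltaS /=; apply: IH.
have /andP [H1 H2] := allP check_reach Q HQ.
case: a; [exact: H1 | exact: H2].
Qed.

Lemma words_size y k : size y = k -> y \in words k.
Proof.
elim: k y => [|k IH] [|b y] Hy //=.
have {}Hy : size y = k by case: Hy.
rewrite cats0 mem_cat; case: b; apply/orP; [left|right]; apply/mapP; exists y => //; exact: IH.
Qed.

Definition ok w := accS init w.

Lemma init_all : all (mem allconfigs) init.
Proof. by case/andP: check_init. Qed.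
Lemma init_R : init \in Rlist.
Proof. by case/andP: check_init. Qed.

Lemma okE w : ok w = has final (deltaS init w).
Proof. by rewrite /ok accS_delta // init_all. Qed.

Lemma sync Q y : Q \in Rlist -> size y = 6 -> deltaS Q y != [::] -> deltaS Q y = deltaS init y.
Proof.
move=> HQ Hy Hn; have /allP := check_sync; move/(_ Q HQ)/allP/(_ y (words_size Hy)).
by rewrite (negbTE Hn) => /eqP.
Qed.

Lemma has_ne (T : eqType) (q : pred T) s : has q s -> s != [::].
Proof. by case: s. Qed.

Lemma split_at (T : Type) (s : seq T) k : k <= size s ->
  exists s1 s2, s = s1 ++ s2 /\ size s2 = k.
Proof.
move=> H; exists (take (size s - k) s), (drop (size s - k) s).
by rewrite cat_take_drop size_drop subKn.
Qed.

Lemma ne_cat Q u v : deltaS Q (u ++ v) != [::] -> deltaS Q u != [::].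
Proof. by rewrite deltaS_cat; apply: contra => /eqP->; rewrite deltaS_nil. Qed.

Lemma ok_glue u v x : 6 <= size v -> ok (u ++ v) -> ok (v ++ x) -> ok (u ++ v ++ x).
Proof.
move=> Hv; rewrite !okE.
have [v1 [v2 [Ev Hv2]]] := split_at Hv; rewrite Ev => H1 H2.
have E1 : deltaS init (u ++ v1 ++ v2) = deltaS init v2.
  rewrite catA deltaS_cat; apply: sync => //; first exact: (@deltaS_R init _ init_R).
  by rewrite -deltaS_cat -catA; apply: has_ne H1.
have E2 : deltaS init (v1 ++ v2) = deltaS init v2.
  rewrite deltaS_cat; apply: sync => //; first exact: (@deltaS_R init _ init_R).
  by rewrite -deltaS_cat; apply: ne_cat (has_ne H2).
have -> : u ++ (v1 ++ v2) ++ x = (u ++ v1 ++ v2) ++ x by rewrite !catA.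
by rewrite deltaS_cat E1 -E2 -deltaS_cat.
Qed.

Lemma ok_suf u x : 6 <= size x -> ok (u ++ x) -> ok x.
Proof.
move=> Hx; rewrite !okE => H.
have [x1 [x2 [Ex Hx1]]] : exists x1 x2, x = x1 ++ x2 /\ size x1 = 6.
  by exists (take 6 x), (drop 6 x); rewrite cat_take_drop size_takel.
move: H; rewrite Ex catA (deltaS_cat _ (u ++ x1)) => H.
have E : deltaS init (u ++ x1) = deltaS init x1.
  rewrite deltaS_cat; apply: sync => //; first exact: (@deltaS_R init _ init_R).
  by rewrite -deltaS_cat; apply: contraTneq H => ->; rewrite deltaS_nil.
by rewrite E -deltaS_cat in H.
Qed.

Lemma ok_pre u x : 5 <= size u -> ok (u ++ x) -> ok u.
Proof.
move=> Hu; rewrite !okE => H.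
have [u1 [u2 [Eu Hu2]]] := split_at Hu.
have Hn : deltaS init u != [::] by apply: ne_cat (has_ne H).
move: Hn; rewrite Eu deltaS_cat => Hn.
have /allP := check_pre; move/(_ _ (@deltaS_R init u1 init_R))/allP/(_ u2 (words_size Hu2)).
by rewrite (negbTE Hn).
Qed.

Lemma ok_key (W : seq bool) l m r : size W = l + m + r -> 6 <= m ->
  ok W = ok (take (l + m) W) && ok (drop l W).
Proof.
move=> HW Hm.
pose u := take l W; pose v := take m (drop l W); pose x := drop m (drop l W).
have EW : W = u ++ v ++ x by rewrite /u /v /x !cat_take_drop.
have Hu : size u = l by rewrite /u size_takel // HW -addnA leq_addr.
have Hv : size v = m by rewrite /v size_takel // size_drop HW -addnA addKn leq_addr.
rewrite EW catA take_size_cat; last by rewrite size_cat Hu Hv.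
rewrite -catA drop_size_cat //.
apply/idP/andP.
- move=> H; split.
    apply: (ok_pre (x:=x)); last by rewrite -catA. by rewrite size_cat Hu Hv; lia.
  by apply: (ok_suf (u:=u)); rewrite // size_cat Hv; lia.
- by case=> H1 H2; apply: ok_glue; rewrite ?Hv.
Qed.

Definition tile_code (t : tile) : nat :=
  match t with Void => 0 | Mono => 1 | Dimer => 2 | LDimer => 3 | RDimer => 4
  | RMono1 => 5 | RMono2 => 6 | TDimer1 => 7 | TDimer2 => 8 end.
Definition tile_decode (n : nat) : option tile :=
  match n with 0 => Some Void | 1 => Some Mono | 2 => Some Dimer | 3 => Some LDimer
  | 4 => Some RDimer | 5 => Some RMono1 | 6 => Some RMono2 | 7 => Some TDimer1
  | 8 => Some TDimer2 | _ => None end.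
Lemma tile_codeK : pcancel tile_code tile_decode. Proof. by case. Qed.
HB.instance Definition _ := Equality.copy tile (pcan_type tile_codeK).

Inductive LangP : nat -> seq tile -> Prop :=
| LP_nil p : LangP p [::]
| LP_cons p p' t D : allowed p t = Some p' -> LangP p' D -> LangP p (t :: D).

Lemma tile_cons t : exists c0 rest, tile_content t = c0 :: rest.
Proof. by case: t; do 2 eexists; reflexivity. Qed.

Lemma accN_rest p rest w :
  accN (p, rest) w <-> exists w', w = rest ++ w' /\ accN (p, [::]) w'.
Proof.
elim: rest w => [|b rest IH] w; first by split => [H|[w' [-> H]]] //; exists w.
case: w => [|a w] /=; first by split => // [[w' [] //]].
split.
- by case/andP => /eqP -> /IH [w' [-> H]]; exists w'.
- by case=> w' [[-> ->] H]; rewrite eqxx /=; apply/IH; exists w'.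
Qed.

Lemma tile_in t : t \in all_tiles.
Proof. by case: t. Qed.

Lemma accN_nil_cons p a w :
  accN (p, [::]) (a :: w) = has (fun t => oapp (accN^~ w) false (tstep p a t)) all_tiles.
Proof. by []. Qed.
Arguments all_tiles : simpl never.

Lemma Lang_acc p D : LangP p D -> accN (p, [::]) (tiling_content D).
Proof.
elim=> [//|{}p p' t {}D Hal _ IH].
rewrite /tiling_content map_cons [flatten _]/=; have [c0 [rest Ht]] := tile_cons t; rewrite Ht cat_cons accN_nil_cons.
apply/hasP; exists t; first exact: tile_in.
rewrite /tstep Hal Ht eqxx /=; apply/accN_rest; by exists (tiling_content D).
Qed.

Lemma acc_Lang n w p : size w <= n -> accN (p, [::]) w ->
  exists D, LangP p D /\ tiling_content D = w.
Proof.
elim: n w p => [|n IH] [|a w] p Hs; try by exists [::]; split => //; constructor.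
rewrite accN_nil_cons; case/hasP => t _; rewrite /tstep.
case Hal: (allowed p t) => [p'|] //=.
have [c0 [rest Ht]] := tile_cons t; rewrite Ht /=.
case: eqP => // Ha /accN_rest [w' [Ew H]].
have Hs' : size w' <= n by move: Hs; rewrite Ew /= size_cat; lia.
have [D [HD HDc]] := IH _ _ Hs' H.
exists (t :: D); split; first by apply: LP_cons Hal HD.
by rewrite /tiling_content /= Ht -/(tiling_content D) HDc Ew Ha.
Qed.

Definition allowedR (p : nat) (t : tile) : option nat :=
  match p, t with
  | 0, LDimer => Some 1
  | 0, Void | 0, Mono | 1, Void | 1, Mono => Some 1
  | 0, RDimer | 0, RMono1 | 0, RMono2 | 1, RDimer | 1, RMono1 | 1, RMono2 => Some 2
  | _, _ => None
  end.

Inductive RootP : nat -> seq tile -> Prop :=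
| RP_nil p : RootP p [::]
| RP_cons p p' t R : allowedR p t = Some p' -> RootP p' R -> RootP p (t :: R).

Lemma RootP2 R : RootP 2 R -> R = [::].
Proof. by move=> H; inversion H; subst => //; case: t H2. Qed.

Lemma RootP1_0 R : RootP 1 R -> RootP 0 R.
Proof.
move=> H; inversion H; subst; first by constructor.
by apply: (RP_cons (p' := p')) => //; clear H; case: t H0 H1.
Qed.

Lemma root_RootP R : root_tiling R -> RootP 0 R.
Proof.
case=> [pre [mid [suf [-> [Hpre [Hmid Hsuf]]]]]].
have Hs : RootP 1 suf.
  case: Hsuf => [->|[->|[->|->]]]; try constructor;
  by apply: (RP_cons (p' := 2)) => //; constructor.
have Hm : RootP 1 (mid ++ suf).
  elim: mid Hmid => [//|t mid IH] Hmid /=.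
  apply: (RP_cons (p' := 1)); last by apply: IH => t' Ht'; apply: Hmid; right.
  by case: (Hmid t (or_introl erefl)) => ->.
case: Hpre => ->; first exact: RootP1_0.
by apply: (RP_cons (p' := 1)).
Qed.

Lemma RootP1_root R : RootP 1 R -> exists mid suf, R = mid ++ suf /\
    (forall t, List.In t mid -> t = Void \/ t = Mono) /\
    (suf = [::] \/ suf = [:: RDimer] \/ suf = [:: RMono1] \/ suf = [:: RMono2]).
Proof.
elim: R => [|t R IH] H; first by exists [::], [::]; split => //; split => //; left.
inversion H; subst.
clear H; case: t H3 H4 => //= [] [<-] H4.
- have [mid [suf [-> [Hm Hs]]]] := IH H4.
  exists (Void :: mid), suf; split => //; split => // t' [<-|]; [left|]; auto.
- have [mid [suf [-> [Hm Hs]]]] := IH H4.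
  exists (Mono :: mid), suf; split => //; split => // t' [<-|]; [right|]; auto.
- by rewrite (RootP2 H4); exists [::], [:: RDimer]; split => //; split => //; auto.
- by rewrite (RootP2 H4); exists [::], [:: RMono1]; split => //; split => //; auto.
- by rewrite (RootP2 H4); exists [::], [:: RMono2]; split => //; split => //; auto.
Qed.

Lemma RootP0_root R : RootP 0 R -> root_tiling R.
Proof.
move=> H; inversion H; subst.
  by exists [::], [::], [::]; split => //; split; [left|split=> //; left].
have [Et|NL] := eqVneq t LDimer.
  subst t; case: H0 => Ep; subst p'.
  have [mid [suf [E [Hm Hs]]]] := RootP1_root H1.
  by exists [:: LDimer], mid, suf; rewrite E; split => //; split => //; right.
have H1' : RootP 1 (t :: R0).
  by apply: (RP_cons (p' := p')) => //; clear H H1; case: t H0 NL.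
have [mid [suf [E [Hm Hs]]]] := RootP1_root H1'.
by exists [::], mid, suf; rewrite E; split => //; split => //; left.
Qed.

Lemma allowedR_allowed p t p' : allowedR p t = Some p' -> allowed p t = Some p'.
Proof. by case: p => [|[|p]]; case: t. Qed.

Lemma derived_Lang R D : derived R D -> forall p, RootP p R -> LangP p D.
Proof.
elim => [|t R0 D0 _ IH|R0 D0 _ IH|R0 D0 _ IH|R0 D0 _ IH] p H.
- constructor.
- inversion H as [|? p1 ? ? Ha Hr]; subst.
  exact: LP_cons (allowedR_allowed Ha) (IH _ Hr).
- inversion H as [|? p1 ? ? Ha Hr]; subst.
  inversion Hr as [|? p2 ? ? Ha2 Hr2]; subst.
  have [Ep Ep1] : (p <= 1) /\ p1 = 1 by case: p Ha {H} => [|[|p]] //= [<-].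
  subst p1; case: Ha2 => Ep2; subst p2.
  apply: (LP_cons (p' := 1)); last exact: IH _ Hr2.
  by case: p Ep Ha {H} => [|[|]].
- inversion H as [|? p1 ? ? Ha Hr]; subst.
  inversion Hr as [|? p2 ? ? Ha2 Hr2]; subst.
  have [Ep Ep1] : (p <= 1) /\ p1 = 1 by case: p Ha {H} => [|[|p]] //= [<-].
  subst p1; case: Ha2 => Ep2; subst p2.
  apply: (LP_cons (p' := 2)); last exact: IH _ Hr2.
  by case: p Ep Ha {H} => [|[|]].
- inversion H as [|? p1 ? ? Ha Hr]; subst.
  inversion Hr as [|? p2 ? ? Ha2 Hr2]; subst.
  have [Ep Ep1] : (p <= 1) /\ p1 = 1 by case: p Ha {H} => [|[|p]] //= [<-].
  subst p1; case: Ha2 => Ep2; subst p2.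
  apply: (LP_cons (p' := 2)); last exact: IH _ Hr2.
  by case: p Ep Ha {H} => [|[|]].
Qed.

Definition expand (t : tile) : seq tile :=
  match t with
  | Dimer => [:: Mono; Mono]
  | TDimer1 => [:: Mono; RMono1]
  | TDimer2 => [:: Mono; RMono2]
  | t => [:: t]
  end.

Lemma derived_expand D : derived (flatten (map expand D)) D.
Proof. elim: D => [|t D IH]; first constructor. by case: t => /=; constructor; exact: IH. Qed.

Lemma Lang_Root p D : LangP p D -> RootP p (flatten (map expand D)).
Proof.
elim => [{}p|{}p p' t D0 Ha _ IH]; first constructor.
case: p Ha => [|[|p]] //=; case: t => //= Ha; case: Ha IH => <- IH;
  repeat (eapply RP_cons; first reflexivity); exact: IH.
Qed.

Lemma vmd_word_ok L w : vmd_word L w <-> size w = L /\ ok w.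
Proof.
split.
- case=> D [[R [HR [Hd Hs]]] Hc]; split; first by rewrite -Hc.
  rewrite /ok /accS /= orbF -Hc; apply: Lang_acc.
  exact: derived_Lang Hd _ (root_RootP HR).
- case=> Hs; rewrite /ok /accS /= orbF => H.
  have [D [HD Hc]] := acc_Lang (leqnn (size w)) H.
  exists D; split => //; exists (flatten (map expand D)); split.
  + exact/RootP0_root/Lang_Root.
  + by split; [exact: derived_expand | rewrite Hc].
Qed.

Import GRing.Theory Num.Theory.
Local Open Scope ring_scope.


Lemma decPE (P : Prop) : Defs.decP P = true <-> P.
Proof. by rewrite /Defs.decP; case: ClassicalEpsilon.excluded_middle_informative. Qed.

Definition Wd n (s : config n) : seq bool := [seq s i | i <- enum 'I_n].

Lemma size_Wd n (s : config n) : size (Wd s) = n.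
Proof. by rewrite /Wd size_map size_enum_ord. Qed.

Lemma restr_eq n (s : config n) a b : (a <= b <= n)%N ->
  restr s a b = take (b - a) (drop a (Wd s)).
Proof.
move=> /andP [Hab Hbn].
have E1 : restr s a b = map (nth false (Wd s)) (filter (fun k => (a <= k < b)%N) (iota 0 n)).
  rewrite -val_enum_ord filter_map -map_comp /restr; apply: eq_map => i /=.
  by rewrite /Wd (nth_map i) ?size_enum_ord ?ltn_ord // nth_ord_enum.
have E2 : filter (fun k => (a <= k < b)%N) (iota 0 n) = iota a (b - a).
  have -> : n = (a + (b - a) + (n - b))%N by lia.
  rewrite !iotaD !filter_cat add0n.
  rewrite (eq_in_filter (a2 := pred0)); last first.
    by move=> k; rewrite mem_iota /= => Hk; apply/negP => /andP []; lia.
  rewrite filter_pred0 (eq_in_filter (a1 := fun k => (a <= k < b)%N) (a2 := pred0) (s := iota _ (n - b))); last first.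
    by move=> k; rewrite mem_iota /= => Hk; apply/negP => /andP []; lia.
  rewrite filter_pred0 cats0 /= (eq_in_filter (a2 := predT)) ?filter_predT //.
  by move=> k; rewrite mem_iota /= => Hk; apply/andP; lia.
rewrite E1 E2 map_nth_iota // size_Wd; lia.
Qed.

Definition Sp n a b (s : config n) := Defs.decP (vmd_word (b - a) (restr s a b)).

Lemma Sp_ok n a b (s : config n) : (a <= b <= n)%N ->
  Sp a b s = ok (take (b - a) (drop a (Wd s))).
Proof.
move=> H; rewrite /Sp restr_eq //; apply/idP/idP.
- by move/decPE/vmd_word_ok => [].
- move=> Hok; apply/decPE/vmd_word_ok; split => //.
  rewrite size_takel // size_drop size_Wd; lia.
Qed.

Lemma proj_ket (C : numClosedFieldType) n (P : pred (config n)) s :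
  ket C s *m proj_ortho (\sum_(t | P t) <<ket C t>>)%MS = if P s then ket C s else 0.
Proof.
case Ps: (P s).
  apply: proj_ortho_id; apply: (sumsmx_sup s) => //; by rewrite genmxE.
apply: proj_ortho_0; rewrite orthomx_sym; apply/sumsmx_subP => t Pt.
rewrite genmxE; apply/orthomx1P.
rewrite /ket trmx_delta map_delta_mx mul_delta_mx_cond (inj_eq enum_rank_inj).
by case: eqP => // Ets; rewrite Ets Ps in Pt.
Qed.

Lemma proj_ket_C (C : numClosedFieldType) n a b s :
  ket C s *m Cproj C n a b = if Sp a b s then ket C s else 0.
Proof. exact: (@proj_ket C n (fun s => Sp a b s) s). Qed.

Lemma rows_eq (C : numClosedFieldType) n (A B : 'M[C]_(dimH n)) :
  (forall s, ket C s *m A = ket C s *m B) -> A = B.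
Proof.
move=> H; apply/row_matrixP => i; rewrite !rowE.
by have := H (enum_val i); rewrite /ket enum_valK.
Qed.

Theorem corollary2p4 (C : numClosedFieldType) (l m r : nat) :
  (0 < l)%N -> (6 <= m)%N -> (0 < r)%N ->
  let n := (l + m + r)%N in
  Cproj C n 0 n = Cproj C n 0 (l + m) *m Cproj C n l n /\
  Cproj C n 0 n = Cproj C n l n *m Cproj C n 0 (l + m).
Proof.
move=> Hl Hm Hr n.
have key (s : config n) : Sp 0 n s = Sp 0 (l + m) s && Sp l n s.
  rewrite !Sp_ok; try (apply/andP; split; rewrite /n; lia).
  rewrite !subn0 drop0 (@take_oversize _ n (Wd s)) ?size_Wd //.
  rewrite (@take_oversize _ (n - l) (drop l (Wd s))) ?size_drop ?size_Wd //.
  by apply: (ok_key (r := r)) => //; exact: size_Wd.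
split; apply: rows_eq => s; rewrite (@proj_ket_C C n 0 n s) key mulmxA.
  rewrite (@proj_ket_C C n 0 (l + m) s).
  by case: (Sp 0 (l + m) s); rewrite /= ?mul0mx ?(@proj_ket_C C n l n s).
rewrite (@proj_ket_C C n l n s).
by case: (Sp l n s); rewrite /= ?andbT ?andbF ?mul0mx ?(@proj_ket_C C n 0 (l + m) s).
Qed.
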